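(* Let $m>0$, $n$ an odd positive integer, $\epsilon>0$, $V=[-m/2,m/2]$. For every $\alpha\in[0,1]$, the mechanism $\mathtt{DPExpMed}_\alpha$ is $\epsilon$-differentially private.
   Context: A dataset is $D=(x_1,\dots,x_n)\in V^n$, indexed so that $x_1\le\dots\le x_n$, with median $\mathcal{T}(D)=x_{\lceil n/2\rceil}$. The percentile loss $q(D,a)$ for $a\in V$ is: $\min\{|\lceil n/2\rceil-i|: a\in[x_i,\mathcal{T}(D)]\}$ if $a\in[x_1,\mathcal{T}(D)]$; $\min\{|\lceil n/2\rceil-i|: a\in[\mathcal{T}(D),x_i]\}$ if $a\in(\mathcal{T}(D),x_n]$; and $\lceil n/2\rceil$ otherwise. The widened percentile loss is $p_\alpha(D,\ell)=\min_{a\in V:|a-\ell|\le\alpha m}q(D,a)$. $\mathtt{DPExpMed}_\alpha(D)$ is the random point of $V$ with density proportional to $\exp(-\frac{\epsilon}{2}p_\alpha(D,\ell))$, $\ell\in V$. Two datasets are neighboring if, as multisets, they differ in exactly one element. A randomized mechanism $\mathcal{M}:V^n\to V$ is $\epsilon$-differentially private if $\Pr[\mathcal{M}(D)\in S]\le e^{\epsilon}\Pr[\mathcal{M}(D')\in S]$ for all neighboring $D,D'$ and measurable $S\subseteq V$. *)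

(* Defs.v *)
From HB Require Import structures.
From mathcomp Require Import all_boot all_order all_algebra.
From mathcomp Require Import all_classical all_reals all_analysis.
Set Implicit Arguments. Unset Strict Implicit. Unset Printing Implicit Defensive.
Import Order.TTheory GRing.Theory Num.Theory.
Import numFieldNormedType.Exports.
Local Open Scope classical_set_scope.
Local Open Scope ring_scope.

Section DPMedian.
Variables (R : realType) (n : nat).

Definition Vdom (m : R) : set R := `[- (m / 2), m / 2]%classic.

(* Order statistics, 1-based: xs D i = x_i where x_1 <= ... <= x_n. *)
Definition xs (D : n.-tuple R) (i : nat) : R :=
  nth 0 (sort (fun x y : R => x <= y) (tval D)) i.-1.

Definition medidx : nat := uphalf n.

Definition median (D : n.-tuple R) : R := xs D medidx.

Definition dist_med (i : nat) : nat := ((medidx - i) + (i - medidx))%N.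

(* percentile loss q(D, a); i ranges over 1..n (encoded as j.+1, j < n) *)
Definition qloss (D : n.-tuple R) (a : R) : nat :=
  let T := median D in
  if (xs D 1 <= a) && (a <= T) then
    \big[minn/medidx]_(j < n | (xs D j.+1 <= a) && (a <= T)) dist_med j.+1
  else if (T < a) && (a <= xs D n) then
    \big[minn/medidx]_(j < n | (T <= a) && (a <= xs D j.+1)) dist_med j.+1
  else medidx.

Definition ploss (m alpha : R) (D : n.-tuple R) (l : R) : R :=
  inf [set ((qloss D a)%:R : R) | a in [set a | Vdom m a /\ `|a - l| <= alpha * m]].

Definition expmed_weight (m eps alpha : R) (D : n.-tuple R) (l : R) : R :=
  expR (- (eps / 2) * ploss m alpha D l).

(* Pr[DPExpMed_alpha(D) \in S] for S a measurable subset of V *)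
Definition DPExpMed_prob (m eps alpha : R) (D : n.-tuple R) (S : set R) : R :=
  (\int[lebesgue_measure]_(l in S) expmed_weight m eps alpha D l) /
  (\int[lebesgue_measure]_(l in Vdom m) expmed_weight m eps alpha D l).

Definition dataset_in (m : R) (D : n.-tuple R) : Prop :=
  forall i : 'I_n, Vdom m (tnth D i).

(* neighboring: as multisets, differ in exactly one element *)
Definition neighboring (D D' : n.-tuple R) : Prop :=
  (exists (i : nat) (y : R), perm_eq (tval D) (set_nth 0 (tval D') i y))
  /\ ~~ perm_eq (tval D) (tval D').

(* eps-differential privacy of a mechanism V^n -> V given by its
   output probabilities Pr[M(D) \in S] *)
Definition eps_DP (m eps : R) (Pr : n.-tuple R -> set R -> R) : Prop :=
  forall D D' : n.-tuple R, dataset_in m D -> dataset_in m D' ->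
  neighboring D D' ->
  forall S : set R, measurable S -> S `<=` Vdom m ->
  Pr D S <= expR eps * Pr D' S.

End DPMedian.

(* Main.v *)
Require Import Defs.
From HB Require Import structures.
From mathcomp Require Import all_boot all_order all_algebra.
From mathcomp Require Import all_classical all_reals all_analysis.
From mathcomp Require Import zify ring lra.
Import Order.TTheory GRing.Theory Num.Theory.
Local Open Scope ring_scope.
Set Implicit Arguments. Unset Strict Implicit.

Section Comb.
Variable R : realType.

Lemma nth_sorted_count (P : pred R) (s : seq R) :
  sorted (fun x y : R => x <= y) s ->
  (forall x y : R, x <= y -> P y -> P x) ->
  forall j, (j < size s)%N -> P (nth 0 s j) = (j < count P s)%N.
Proof.
move=> Hs Pd.
elim: s Hs => // x s IH /= Hs.
have Hall : all (fun y => x <= y) s.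
  by apply: order_path_min => //; exact: le_trans.
have Hs' : sorted (fun x y : R => x <= y) s by exact: path_sorted Hs.
case Px: (P x) => /=.
  case=> [|j] /=; first by rewrite add1n.
  by rewrite ltnS => Hj; rewrite IH // add1n ltnS.
have c0 : count P s = 0%N.
  apply/eqP; rewrite -leqn0 leqNgt -has_count; apply/hasPn => y ys.
  apply/negP => Py; have := allP Hall y ys => xy.
  by move: (Pd _ _ xy Py); rewrite Px.
rewrite c0 add0n; case=> [|j] //= Hj.
apply/negP => Pj; have := allP Hall (nth 0 s j) (mem_nth 0 Hj) => xy.
by move: (Pd _ _ xy Pj); rewrite Px.
Qed.

Lemma count_set_nth (P : pred R) (s : seq R) i (y : R) :
  (i < size s)%N ->
  (count P (set_nth (0%R:R) s i y) + P (nth (0%R:R) s i) = count P s + P y)%N.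
Proof.
elim: s i => [//|x s IH] [|i] /=.
- move=> _; case: (P x); case: (P y); lia.
- rewrite ltnS => /IH; case: (P x); lia.
Qed.

End Comb.


Lemma bigmin_le n (P : pred 'I_n) (F : 'I_n -> nat) idx j :
  P j -> (\big[minn/idx]_(i < n | P i) F i <= F j)%N.
Proof.
rewrite unlock /=; have : j \in index_enum 'I_n by rewrite mem_index_enum.
elim: (index_enum 'I_n) => //= x r IH; rewrite inE => /orP [/eqP <-|jr] Pj.
  by rewrite Pj geq_minl.
case: (P x); last exact: IH.
by apply: leq_trans (geq_minr _ _) (IH jr Pj).
Qed.

Lemma bigmin_ge n (P : pred 'I_n) (F : 'I_n -> nat) idx c :
  (c <= idx)%N -> (forall i, P i -> c <= F i)%N ->
  (c <= \big[minn/idx]_(i < n | P i) F i)%N.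
Proof.
move=> ci cF; apply: (big_ind (fun x => c <= x)%N) => //.
by move=> x y cx cy; rewrite leq_min cx cy.
Qed.

Section Char.
Variables (R : realType) (n : nat).

Definition cL (D : n.-tuple R) (a : R) := count (fun x => x <= a) D.
Definition cG (D : n.-tuple R) (a : R) := count (fun x => a <= x) D.

Lemma qloss_char (D : n.-tuple R) (a : R) : odd n ->
  qloss D a = (uphalf n - minn (uphalf n) (minn (cL D a) (cG D a)))%N.
Proof.
move=> on.
have [k [ek en]] : exists k, uphalf n = k.+1 /\ n = (2 * k).+1.
  exists n./2; rewrite uphalf_half on; split => //.
  by have := odd_double_half n; rewrite on -mul2n; lia.
set s := sort (fun x y : R => x <= y) (tval D).
have ss : sorted (fun x y : R => x <= y) s.
  by apply: sort_sorted => x y; exact: le_total.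
have ps : perm_eq s D by rewrite perm_sort.
have sz : size s = n by rewrite size_sort size_tuple.
set L := cL D a; set G := cG D a.
have Ls : count (fun x => x <= a) s = L by rewrite /L /cL (permP ps).
have Gs : count (fun x => a <= x) s = G by rewrite /G /cG (permP ps).
set Lt := count (fun x => x < a) s.
have H1 j : (j < n)%N -> (nth 0 s j <= a) = (j < L)%N.
  move=> jn; rewrite -Ls; apply: nth_sorted_count => //; last by rewrite sz.
  by move=> x y xy ya; exact: le_trans xy ya.
have H2 j : (j < n)%N -> (nth 0 s j < a) = (j < Lt)%N.
  move=> jn; apply: nth_sorted_count => //; last by rewrite sz.
  by move=> x y xy ya; exact: le_lt_trans xy ya.
have H3 j : (j < n)%N -> (a <= nth 0 s j) = ~~ (j < Lt)%N.
  by move=> jn; rewrite leNgt H2.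
have HLG : (Lt + G = n)%N.
  rewrite -Gs -sz -(count_predC (fun x => x < a)); congr (_ + _)%N.
  by apply: eq_count => x /=; rewrite leNgt.
have HLt : (Lt <= L)%N by rewrite -Ls; apply: sub_count => x /= /ltW.
have HL : (L <= n)%N by rewrite -Ls -sz count_size.
rewrite /qloss /median /xs /medidx /dist_med ek /=.
rewrite -/s /medidx ek.
have n0 : (0 < n)%N by lia.
have kn : (k < n)%N by lia.
have nn : (n.-1 < n)%N by lia.
rewrite (H1 0 n0) (H3 k kn) (H2 k kn) (H3 n.-1 nn) (H1 k kn).
under eq_bigl => j do rewrite (H1 j (ltn_ord j)).
have HG : (G <= n)%N by lia.
case: ifP => [/andP [c1 c2]|c12].
  apply/eqP; rewrite eqn_leq; apply/andP; split.
    have jn : ((minn L k.+1).-1 < n)%N by lia.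
    apply: leq_trans (@bigmin_le _ _ _ _ (Ordinal jn) _) _.
      by rewrite /= c2 andbT; lia.
    rewrite /=; lia.
  apply: bigmin_ge; first by lia.
  move=> j /andP [jL _]; lia.
case: ifP => [/andP [c1 c2]|c3].
  under eq_bigl => j do rewrite (H3 j (ltn_ord j)).
  apply/eqP; rewrite eqn_leq; apply/andP; split.
    have jn : (Lt < n)%N by lia.
    apply: leq_trans (@bigmin_le _ _ _ _ (Ordinal jn) _) _.
      rewrite /= ltnn /= andbT; lia.
    rewrite /=; lia.
  apply: bigmin_ge; first by lia.
  move=> j /andP [_ jL]; lia.
move: c12 c3; case E1: (0 < L)%N; case E2: (k < Lt)%N; case E3: (n.-1 < Lt)%N => //= _ _; lia.
Qed.
End Char.


Section Sens.
Variables (R : realType) (n : nat).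

Lemma neighbor_count (D D' : n.-tuple R) (P : pred R) : neighboring D D' ->
  (count P D <= count P D' + 1)%N /\ (count P D' <= count P D + 1)%N.
Proof.
move=> [[i [y Hp]] _].
have szD' : size D' = n by rewrite size_tuple.
have hi : (i < size D')%N.
  have := perm_size Hp; rewrite size_set_nth !size_tuple => e.
  move: e; case: (ltnP i n) => [//|hin]; rewrite (maxn_idPl _); lia.
have := @count_set_nth R P _ _ y hi; rewrite -(permP Hp).
by case: (P y); case: (P _) => /=; lia.
Qed.

Lemma qloss_sens (D D' : n.-tuple R) a : odd n -> neighboring D D' ->
  (qloss D a <= qloss D' a + 1)%N /\ (qloss D' a <= qloss D a + 1)%N.
Proof.
move=> on nb; rewrite !qloss_char //.
have [h1 h2] : (cL D a <= cL D' a + 1)%N /\ (cL D' a <= cL D a + 1)%N.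
  exact: neighbor_count _ _ (fun x => x <= a) nb.
have [h3 h4] : (cG D a <= cG D' a + 1)%N /\ (cG D' a <= cG D a + 1)%N.
  exact: neighbor_count _ _ (fun x => a <= x) nb.
move: h1 h2 h3 h4; generalize (cL D a) (cL D' a) (cG D a) (cG D' a) (uphalf n).
move=> x1 x2 x3 x4 u; lia.
Qed.

Lemma inf_sens (U : set R) (f g : R -> nat) : (U !=set0)%classic ->
  (forall a, U a -> (f a <= g a + 1)%N) ->
  inf [set ((f a)%:R : R) | a in U] <= inf [set ((g a)%:R : R) | a in U] + 1.
Proof.
move=> [a0 Ua0] fg; rewrite -lerBlDr; apply: lb_le_inf.
  by exists (g a0)%:R, a0.
move=> _ [a Ua <-]; rewrite lerBlDr.
apply: le_trans (ge_inf _ _) _.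
- by exists 0 => _ [b _ <-]; exact: ler0n.
- by exists a.
by rewrite natr1 ler_nat -addn1 fg.
Qed.

Lemma inf_nat_ge0 (U : set R) (f : R -> nat) : (U !=set0)%classic ->
  0 <= inf [set ((f a)%:R : R) | a in U].
Proof.
move=> [a0 Ua0]; apply: lb_le_inf; first by exists (f a0)%:R, a0.
by move=> _ [b _ <-]; exact: ler0n.
Qed.

Lemma ploss_sens (m alpha : R) (D D' : n.-tuple R) l :
  odd n -> neighboring D D' -> 0 <= alpha * m -> Vdom m l ->
  [/\ 0 <= ploss m alpha D l, 0 <= ploss m alpha D' l,
      ploss m alpha D l <= ploss m alpha D' l + 1 &
      ploss m alpha D' l <= ploss m alpha D l + 1].
Proof.
move=> on nb am Vl.
have ne : ([set a | Vdom m a /\ `|a - l| <= alpha * m] !=set0)%classic.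
  by exists l; split => //; rewrite subrr normr0.
split; try exact: inf_nat_ge0.
  apply: inf_sens => // a _; exact: (qloss_sens a on nb).1.
apply: inf_sens => // a _; exact: (qloss_sens a on nb).2.
Qed.

End Sens.

Section P4.
Local Open Scope classical_set_scope.


Section Int.
Context d (T : measurableType d) (R : realType) (mu : {measure set T -> \bar R}).
Local Open Scope ereal_scope.
Import HBNNSimple.

Lemma int_mono (D : set T) (f g : T -> R) :
  (forall x, D x -> 0 <= f x <= g x)%R ->
  \int[mu]_(x in D) (f x)%:E <= \int[mu]_(x in D) (g x)%:E.
Proof.
move=> fg.
rewrite !ge0_integralE; first last.
- by move=> x /fg /andP [f0 fg']; rewrite lee_fin //; exact: le_trans f0 fg'.
- by move=> x /fg /andP [f0 fg']; rewrite lee_fin //; exact: le_trans f0 fg'.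
apply: ereal_sup_le => _ [h hf <-]; exists h => // x; apply: le_trans (hf x) _.
rewrite /patch; case: ifP => // /set_mem /fg /andP [_ ?].
by rewrite lee_fin.
Qed.

Lemma int_dom (S V : set T) (f : T -> R) : S `<=` V ->
  (forall x, V x -> 0 <= f x)%R ->
  \int[mu]_(x in S) (f x)%:E <= \int[mu]_(x in V) (f x)%:E.
Proof.
move=> SV f0.
rewrite !ge0_integralE; first last.
- by move=> x Hx; rewrite lee_fin; apply: f0; first [exact: Hx | exact: SV Hx].
- by move=> x Hx; rewrite lee_fin; apply: f0; first [exact: Hx | exact: SV Hx].
apply: ereal_sup_le => _ [h hf <-]; exists h => // x; apply: le_trans (hf x) _.
rewrite /patch; case: ifP => [/set_mem Sx|_].
  by rewrite ifT //; apply/mem_set/SV.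
by case: ifP => // /set_mem /f0; rewrite lee_fin.
Qed.

Lemma int_scale (D : set T) (c : R) (f : T -> R) : (0 < c)%R ->
  (forall x, D x -> 0 <= f x)%R ->
  \int[mu]_(x in D) (c * f x)%:E <= c%:E * \int[mu]_(x in D) (f x)%:E.
Proof.
move=> c0 f0.
rewrite !ge0_integralE; first last.
- by move=> x /f0 ?; rewrite lee_fin mulr_ge0 // ltW.
- by move=> x /f0; rewrite lee_fin.
apply: ge_ereal_sup => _ [h hf <-].
have ci0 : (0 <= c^-1)%R by rewrite invr_ge0 ltW.
pose h' := scale_nnsfun h ci0.
have h'E : sintegral mu h' = c^-1%:E * sintegral mu h.
  exact: sintegralrM.
have : sintegral mu h' <= ereal_sup [set sintegral mu g | g in
   [set g : {nnsfun T >-> R} | forall x, (g x)%:E <= ((fun x => (f x)%:E) \_ D) x]].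
  apply: ereal_sup_ubound; exists h' => // x.
  have := hf x; rewrite /patch /=; case: ifP => _; rewrite !lee_fin.
    by move=> hx; rewrite ler_pdivrMl // mulr1.
  by move=> hx; rewrite mulr_ge0_le0.
rewrite h'E => H.
have -> : sintegral mu h = c%:E * (c^-1%:E * sintegral mu h).
  by rewrite muleA -EFinM mulfV ?gt_eqF // mul1e.
by apply: lee_wpmul2l => //; rewrite lee_fin ltW.
Qed.

Lemma int_fin (D : set T) (f : T -> R) : measurable D -> mu D < +oo ->
  (forall x, D x -> 0 <= f x <= 1)%R ->
  \int[mu]_(x in D) (f x)%:E \is a fin_num.
Proof.
move=> mD muD f01.
rewrite ge0_fin_numE; last by apply: integral_ge0 => x /f01 /andP [? _]; rewrite lee_fin.
apply: (le_lt_trans (int_mono (g := fun _ => 1%R) f01)).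
by rewrite (integral_cst mu mD 1%:E) mul1e.
Qed.

End Int.

Lemma final_ineq (R : realType) (A B A' B' c : R) : (0 <= A -> 0 <= B -> 0 <= A' ->
  0 < c -> A <= c * A' -> B' <= c * B -> A' <= B' ->
  A / B <= c * c * (A' / B'))%R.
Proof.
move=> A0 B0 A'0 c0 hA hB hAB.
have B'0 : (0 <= B')%R by exact: le_trans A'0 hAB.
have rhs0 : (0 <= c * c * (A' / B'))%R by rewrite mulr_ge0 ?divr_ge0 // mulr_ge0 // ltW.
have [->|Bn0] := eqVneq B 0%R; first by rewrite invr0 mulr0.
have Bp : (0 < B)%R by rewrite lt_def Bn0.
have [B'z|B'n0] := eqVneq B' 0%R.
  have A'z : A' = 0%R by apply/eqP; rewrite eq_le A'0 andbT -B'z.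
  have Az : A = 0%R by apply/eqP; rewrite eq_le A0 andbT; move: hA; rewrite A'z mulr0.
  by rewrite Az mul0r.
have B'p : (0 < B')%R by rewrite lt_def B'n0.
rewrite ler_pdivrMr //.
have h1 : (1 <= c * B / B')%R by rewrite ler_pdivlMr // mul1r.
have -> : (c * c * (A' / B') * B = (c * A') * (c * B / B'))%R.
  by ring.
apply: le_trans hA _; apply: ler_peMr => //; exact: mulr_ge0 (ltW c0) A'0.
Qed.

Section Ratio.
Context d (T : measurableType d) (R : realType) (mu : {measure set T -> \bar R}).

Lemma dp_ratio (S V : set T) (f g : T -> R) (c : R) :
  measurable S -> measurable V -> (mu V < +oo)%E -> S `<=` V -> (0 < c)%R ->
  (forall x, V x -> 0 <= f x <= 1)%R -> (forall x, V x -> 0 <= g x <= 1)%R ->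
  (forall x, V x -> f x <= c * g x)%R -> (forall x, V x -> g x <= c * f x)%R ->
  (fine (\int[mu]_(x in S) (f x)%:E) / fine (\int[mu]_(x in V) (f x)%:E) <=
   c * c * (fine (\int[mu]_(x in S) (g x)%:E) / fine (\int[mu]_(x in V) (g x)%:E)))%R.
Proof.
move=> mS mV VV SV c0 f01 g01 fc gc.
have SS : (mu S < +oo)%E.
  apply: le_lt_trans VV; apply: le_measure => //; rewrite inE //.
have fA := int_fin mS SS (fun x Sx => f01 x (SV x Sx)).
have fA' := int_fin mS SS (fun x Sx => g01 x (SV x Sx)).
have fB := int_fin mV VV f01.
have fB' := int_fin mV VV g01.
have eA : (\int[mu]_(x in S) (f x)%:E <= c%:E * \int[mu]_(x in S) (g x)%:E)%E.
  apply: le_trans (int_mono mu (D := S) (f := f) (g := fun x => c * g x)%R _)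
    (int_scale mu c0 _).
    move=> x /SV Vx; have /andP [-> _] := f01 x Vx; exact: fc.
  by move=> x /SV /g01 /andP [].
have eB : (\int[mu]_(x in V) (g x)%:E <= c%:E * \int[mu]_(x in V) (f x)%:E)%E.
  apply: le_trans (int_mono mu (D := V) (f := g) (g := fun x => c * f x)%R _)
    (int_scale mu c0 _).
    move=> x Vx; have /andP [-> _] := g01 x Vx; exact: gc.
  by move=> x /f01 /andP [].
have eAB : (\int[mu]_(x in S) (g x)%:E <= \int[mu]_(x in V) (g x)%:E)%E.
  by apply: int_dom => // x /g01 /andP [].
apply: final_ineq.
- apply: fine_ge0; apply: integral_ge0 => x Sx; rewrite lee_fin.
  by case/andP: (f01 x (SV x Sx)).
- apply: fine_ge0; apply: integral_ge0 => x Sx; rewrite lee_fin.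
  by case/andP: (f01 x Sx).
- apply: fine_ge0; apply: integral_ge0 => x Sx; rewrite lee_fin.
  by case/andP: (g01 x (SV x Sx)).
- exact: c0.
- by rewrite -lee_fin EFinM (fineK fA) (fineK fA').
- by rewrite -lee_fin EFinM (fineK fB) (fineK fB').
- by rewrite -lee_fin (fineK fA') (fineK fB').
Qed.

End Ratio.

End P4.
Unset Implicit Arguments. Set Strict Implicit.

Theorem lemma7p6 (R : realType) (m eps : R) (n : nat) :
  0 < m -> (0 < n)%N -> odd n -> 0 < eps ->
  forall alpha : R, 0 <= alpha <= 1 ->
  eps_DP (n:=n) m eps (DPExpMed_prob m eps alpha).
Proof.
move=> m0 n0 on e0 alpha /andP [a0 a1] D D' _ _ nb S mS SV.
set c := expR (eps / 2).
have c0 : 0 < c by exact: expR_gt0.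
have am : 0 <= alpha * m by rewrite mulr_ge0 // ltW.
have hw l : Vdom m l ->
   [/\ 0 <= expmed_weight m eps alpha D l <= 1,
       0 <= expmed_weight m eps alpha D' l <= 1,
       expmed_weight m eps alpha D l <= c * expmed_weight m eps alpha D' l &
       expmed_weight m eps alpha D' l <= c * expmed_weight m eps alpha D l].
  move=> Vl.
  have [p0 p0' ple ple'] := ploss_sens on nb am Vl.
  have e2 : 0 < eps / 2 by rewrite divr_gt0.
  rewrite /expmed_weight !expR_ge0 /= !expR_le1 /c -!expRD !ler_expR.
  split; try (by rewrite mulNr oppr_le0 mulr_ge0 // ltW); nra.
have mV : measurable (Vdom m) by exact: measurable_itv.
have VV : (lebesgue_measure (Vdom m) < +oo)%E.
  by rewrite /Vdom lebesgue_measure_itv; case: ifP => _ //=; rewrite -EFinD ltry.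
rewrite /DPExpMed_prob /Rintegral.
rewrite (_ : expR eps = c * c); last by rewrite /c -expRD -splitr.
apply: dp_ratio.
- Timeout 30 exact: mS.
- Timeout 30 exact: mV.
- Timeout 30 exact: VV.
- exact: SV.
- exact: c0.
- by move=> x /hw [].
- by move=> x /hw [].
- by move=> x /hw [].
- by move=> x /hw [].
Qed.
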